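(* Consider the constrained queuing network described in the context, operating under the MUCF($f$) algorithm with $f$ non-decreasing, $f(0)=0$, and bi-Lipschitz with constant $\rho>1$, and with strictly admissible arrival rate vector $\lambda\in\{\sum_i\alpha_i\pi^i:\alpha_i\ge0,\ \pi^i\in\mathscr{S},\ \sum_i\alpha_i<1\}$. Let $Z_\tau=\frac{1}{\tau\log\tau}\sum_{i=1}^\tau|W(i)|$ and suppose there is a constant $C<\infty$ with $\mathbb{E}[Z_\tau]\le C$ for all $\tau\ge2$. Then $$\Pr\Big(\lim_{\tau\to\infty}\tfrac{1}{\tau}|W(\tau)|=0\Big)=1.$$
   Context: Constrained queuing network: $N$ queues, discrete time, unit-length packets, arrivals $A_n(\tau)\in\{0,1\}$ i.i.d. Bernoulli($\lambda_n$) over time and independent across queues. Finite monotone feasible schedule set $\mathscr{S}\subseteq\{0,1\}^N$ in which every queue is served by some schedule; $\mathscr{S}_{\max}$ its maximal elements. Dynamics $Q_n(\tau+1)=(Q_n(\tau)-S_n(\tau))^++A_n(\tau)$ with $S(\tau)\in\mathscr{S}$. Each packet has a predetermined destination among $M$ output queues. Shadow CFN: copies of arrivals immediately join their destination output queue, each served (at most one packet per slot) by a work-conserving single-queue policy; $d(p)$ is the departure time of packet $p$ from the shadow CFN. MUCF($f$): constrained queues are FIFO; output queues order packets by increasing $d(p)$; at time $\tau$, urgency $U_n(\tau)=\tau-d(p_n^\tau)$ for non-empty queue $n$ with head-of-line (HoL) packet $p_n^\tau$, and $U_n(\tau)=-\max\{0,-\min_{k:Q_k(\tau)>0}U_k(\tau)\}$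 for empty $n$; choose $S(\tau)\in\arg\max_{\pi\in\mathscr{S}_{\max}}\sum_nf(U_n(\tau))\pi_n$. $W_n(\tau)$ is the waiting time $\tau-a_n(\tau)$ of the HoL packet of queue $n$ ($a_n(\tau)$ its arrival time), or $0$ if queue $n$ is empty; $|W(\tau)|=\sum_nW_n(\tau)$. *)

(* Defs.v *)
From HB Require Import structures.
From mathcomp Require Import all_boot all_order all_algebra.
From mathcomp Require Import all_classical all_reals all_analysis.
Set Implicit Arguments. Unset Strict Implicit. Unset Printing Implicit Defensive.
Import Order.TTheory GRing.Theory Num.Theory.
Import numFieldNormedType.Exports.
Local Open Scope classical_set_scope.
Local Open Scope ring_scope.

(* A schedule: which of the N constrained queues are served in a slot. *)
Definition schedule (N : nat) := {ffun 'I_N -> bool}.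

Definition monotone_sched (N : nat) (S : {set schedule N}) : Prop :=
  forall pi pi' : schedule N, pi \in S -> (forall n, pi' n ==> pi n) -> pi' \in S.

Definition covers_all (N : nat) (S : {set schedule N}) : Prop :=
  forall n : 'I_N, exists2 pi, pi \in S & pi n.

Definition Smax (N : nat) (S : {set schedule N}) : {set schedule N} :=
  [set pi in S | [forall pi' in S, [forall n, pi n ==> pi' n] ==> (pi' == pi)]].

Definition strictly_admissible (R : realType) (N : nat) (S : {set schedule N})
  (lambda : 'I_N -> R) : Prop :=
  exists (k : nat) (alpha : 'I_k -> R) (pis : 'I_k -> schedule N),
    [/\ forall i, 0 <= alpha i, forall i, pis i \in S,
        \sum_(i < k) alpha i < 1 &
        forall n, lambda n = \sum_(i < k) alpha i * (pis i n)%:R].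

(* Contents of constrained queue n at (the start of) slot tau, as the FIFO
   list of arrival times of the packets present (head = HoL packet), given
   arrivals arr n t (= A_n(t)) and schedules s t; queues start empty. *)
Fixpoint qstate (N : nat) (arr : 'I_N -> nat -> bool)
  (s : nat -> schedule N) (tau : nat) (n : 'I_N) : seq nat :=
  match tau with
  | 0 => [::]
  | t.+1 => (if s t n then behead (qstate arr s t n) else qstate arr s t n)
            ++ (if arr n t then [:: t] else [::])
  end.

Definition Wq (N : nat) (arr : 'I_N -> nat -> bool) (s : nat -> schedule N)
  (n : 'I_N) (tau : nat) : nat :=
  if qstate arr s tau n is a :: _ then (tau - a)%N else 0%N.

Definition absW (N : nat) (arr : 'I_N -> nat -> bool) (s : nat -> schedule N)
  (tau : nat) : nat := (\sum_(n < N) Wq arr s n tau)%N.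

(* Shadow CFN: dest n t is the (predetermined) destination output queue of the
   packet arriving at queue n in slot t, and dep n t its departure time
   (the slot in which it is served) from the shadow CFN. The departure
   function of a work-conserving single-server policy at each output queue is
   characterised by: a packet becomes available after its arrival slot, each
   output queue serves at most one packet per slot, and an output queue that
   holds a packet in slot tau serves some packet in slot tau. *)
Definition shadow_cfn (N M : nat) (arr : 'I_N -> nat -> bool)
  (dest : 'I_N -> nat -> 'I_M) (dep : 'I_N -> nat -> nat) : Prop :=
  [/\ (forall n t, arr n t -> (t < dep n t)%N),
      (forall n t n' t', arr n t -> arr n' t' -> dest n t = dest n' t' ->
          dep n t = dep n' t' -> n = n' /\ t = t') &
      (forall (tau : nat) (m : 'I_M),
          (exists n t, [/\ arr n t, dest n t = m, (t < tau)%N & (tau <= dep n t)%N]) ->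
          exists n t, [/\ arr n t, dest n t = m & dep n t = tau])].

Definition Uhol (N : nat) (arr : 'I_N -> nat -> bool) (s : nat -> schedule N)
  (dep : 'I_N -> nat -> nat) (tau : nat) (n : 'I_N) : int :=
  if qstate arr s tau n is a :: _ then (tau%:Z - (dep n a)%:Z)%R else 0.

(* Urgency U_n(tau); for an empty queue
   -max{0, -min_{k nonempty} U_k} = -max(0, max_{k nonempty} (-U_k))
   (which is 0 when every queue is empty). *)
Definition urgency (N : nat) (arr : 'I_N -> nat -> bool) (s : nat -> schedule N)
  (dep : 'I_N -> nat -> nat) (tau : nat) (n : 'I_N) : int :=
  if qstate arr s tau n != [::] then Uhol arr s dep tau n
  else - \big[Num.max/0]_(k < N | qstate arr s tau k != [::]) (- Uhol arr s dep tau k).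

Definition MUCF (R : realType) (N : nat) (S : {set schedule N}) (f : R -> R)
  (arr : 'I_N -> nat -> bool) (dep : 'I_N -> nat -> nat)
  (s : nat -> schedule N) : Prop :=
  forall tau : nat,
    s tau \in Smax S /\
    forall pi, pi \in Smax S ->
      \sum_(n < N) f (urgency arr s dep tau n)%:~R * (pi n)%:R
      <= \sum_(n < N) f (urgency arr s dep tau n)%:~R * (s tau n)%:R.

Definition good_f (R : realType) (f : R -> R) (rho : R) : Prop :=
  [/\ 1 < rho, {homo f : x y / x <= y}, f 0 = 0 &
      forall x y, `|x - y| / rho <= `|f x - f y| <= rho * `|x - y|].

Definition mutually_independent_bool (d : measure_display) (T : measurableType d)
  (R : realType) (P : probability T R) (I : eqType) (X : I -> T -> bool) : Prop :=
  forall (F : seq I) (b : I -> bool), uniq F ->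
    P (\bigcap_(i in [set` F]) [set w | X i w = b i]) =
    (\prod_(i <- F) P [set w | X i w = b i])%E.

Definition Zt (R : realType) (N : nat) (arr : 'I_N -> nat -> bool)
  (s : nat -> schedule N) (tau : nat) : R :=
  (tau%:R * ln tau%:R)^-1 * \sum_(1 <= i < tau.+1) (absW arr s i)%:R.

(* Main.v *)
Require Import Defs.
From HB Require Import structures.
From mathcomp Require Import all_boot all_order all_algebra.
From mathcomp Require Import all_classical all_reals all_analysis.
From mathcomp Require Import zify measurable_realfun.
Import Order.TTheory GRing.Theory Num.Theory.
Import numFieldNormedType.Exports.
Local Open Scope classical_set_scope.
Local Open Scope ring_scope.

Section Det.
Variables (N : nat) (arr : 'I_N -> nat -> bool) (s : nat -> schedule N).

Lemma qinv tau n : sorted leq (qstate arr s tau n) && all (fun x => x < tau)%N (qstate arr s tau n).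
Proof.
elim: tau => [|t /andP[IHs IHa]] //=.
set q' := (if s t n then _ else _).
have [Hs' Ha'] : sorted leq q' /\ all (fun x => x < t)%N q'.
  rewrite /q'; case: (s t n) => //.
  case: (qstate arr s t n) IHs IHa => //= a l Hs /andP[_ Ha]; split => //.
  exact: path_sorted Hs.
case: (arr n t); rewrite ?cats0; last first.
  by rewrite Hs' /=; apply/allP => x /(allP Ha') /ltnW.
apply/andP; split.
  case: q' Hs' Ha' => // b l Hs Ha.
  rewrite /= cat_path; rewrite /= in Hs; rewrite Hs /= andbT.
  have : last b l \in b :: l by exact: mem_last.
  by move/(allP Ha)/ltnW.
rewrite all_cat /= ltnSn !andbT. by apply/allP => x /(allP Ha') /ltnW.
Qed.

Lemma Wq_step n t : (Wq arr s n t.+1 <= Wq arr s n t + 1)%N.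
Proof.
rewrite /Wq /=.
have /andP[Hs Ha] := qinv t n.
set q := qstate arr s t n in Hs Ha *.
case Eq: q Hs Ha => [|a l] Hs Ha.
  by case: (s t n); case: (arr n t) => //=; rewrite subSnn.
have alt : (a < t)%N by move: Ha => /= /andP[].
case: (s t n) => /=; last by lia.
case: l Hs Ha Eq => [|b l] Hs Ha Eq /=.
  by case: (arr n t) => //=; rewrite subSnn; lia.
have : (a <= b)%N by move: Hs => /= /andP[].
lia.
Qed.

Lemma absW_step t : (absW arr s t.+1 <= absW arr s t + N)%N.
Proof.
rewrite /absW -[X in (_ <= _ + X)%N](card_ord N) -sum1_card -big_split /=.
by apply: leq_sum => i _; exact: Wq_step.
Qed.

End Det.

Local Close Scope ring_scope.
Local Close Scope classical_set_scope.
Section Core.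
Variables (a : nat -> nat) (N : nat).
Hypothesis Hs : forall t, a t.+1 <= a t + N.

Definition Ssum t := \sum_(1 <= i < t.+1) a i.

Lemma back j t : j <= t -> a t <= a (t - j) + N * j.
Proof.
elim: j => [|j IH] Hj; first by rewrite subn0 muln0 addn0.
have := IH (ltnW Hj).
have -> : t - j = (t - j.+1).+1 by lia.
have := Hs (t - j.+1). lia.
Qed.

Lemma S_mono t t' : t <= t' -> Ssum t <= Ssum t'.
Proof.
move=> le; rewrite /Ssum (@big_cat_nat _ _ _ t.+1 1 t'.+1) //=; try lia.
Qed.

Lemma S_lb L t : L <= t -> L * (a t - N * L) <= Ssum t.
Proof.
move=> Lt; rewrite /Ssum (@big_cat_nat _ _ _ (t.+1 - L) 1 t.+1) //=; try lia.
apply: leq_trans (leq_addl _ _).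
have E : t.+1 - (t.+1 - L) = L by lia.
rewrite -{1}E -sum_nat_const_nat big_nat_cond [X in _ <= X]big_nat_cond.
apply: leq_sum => i /andP[/andP[Hi1 Hi2] _].
have := @back (t - i) t (leq_subr i t).
have -> : t - (t - i) = i by lia.
have : N * (t - i) <= N * L by apply: leq_mul => //; lia.
lia.
Qed.

Lemma core V m :
  (forall k, Ssum (8 ^ (k + 1)) <= V * (2 ^ (k + 1) * 8 ^ (k + 1) * 8 * (k + 1))) ->
  exists K, forall tau, K <= tau -> a tau * 2 ^ m <= tau.
Proof.
move=> HS.
set p := N.+1.
set B := V * 2 ^ (2 * m + p + 9).
exists (8 ^ (B + m + p)) => tau Ht.
have tau0 : 0 < tau by apply: leq_trans Ht; rewrite expn_gt0.
set k := trunc_log 8 tau.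
have kge : B + m + p <= k by apply: trunc_log_max.
have lo : 8 ^ k <= tau by apply: trunc_logP.
have hi : tau < 8 ^ k.+1 by apply: trunc_log_ltn.
have e8 : forall j, 8 ^ j = 2 ^ (3 * j) by move=> j; rewrite expnM.
rewrite leqNgt; apply/negP => Hlt.
set x := 3 * k - m.
have xa : 2 ^ x < a tau.
  rewrite -(ltn_pmul2r (expn_gt0 2 m)) -expnD.
  have -> : x + m = 3 * k by lia.
  by rewrite -e8; apply: leq_ltn_trans lo Hlt.
set L := 2 ^ (x - p).
have NL : N * L <= 2 ^ (x - 1).
  have -> : x - 1 = N + (x - p) by lia.
  rewrite expnD leq_mul2r; apply/orP; right; exact: ltnW (ltn_expl N (ltnSn 1)).
have aNL : 2 ^ (x - 1) <= a tau - N * L.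
  have : 2 ^ x = 2 ^ (x - 1) + 2 ^ (x - 1).
    rewrite addnn -mul2n -expnS; congr (2 ^ _); lia.
  lia.
have Lt : L <= tau.
  apply: leq_trans lo; rewrite e8 leq_exp2l //; lia.
have H1 := @S_lb L tau Lt.
have H2 := @S_mono _ _ (ltnW hi).
have H3 := HS k.
have kk : k + 1 <= 2 ^ (k + 1) by apply: ltnW; exact: ltn_expl.
have H4 : 2 ^ (x - p) * 2 ^ (x - 1) <= V * 2 ^ (5 * k + 8).
  apply: leq_trans (leq_trans (leq_mul (leqnn L) aNL) H1) _.
  apply: leq_trans (leq_trans H2 (leq_trans _ H3)) _.
    by rewrite addn1.
  rewrite leq_mul2l; apply/orP; right.
  apply: leq_trans (leq_mul (leqnn _) kk) _.
  rewrite e8 -mulnA (_ : 8 = 2 ^ 3) // -!expnD leq_exp2l //; lia.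
have H5 : 2 ^ (6 * k) <= B * 2 ^ (5 * k).
  have -> : 2 ^ (6 * k) = 2 ^ (x - p) * 2 ^ (x - 1) * 2 ^ (2 * m + p + 1).
    rewrite -!expnD; congr (2 ^ _); lia.
  have -> : B * 2 ^ (5 * k) = V * 2 ^ (5 * k + 8) * 2 ^ (2 * m + p + 1).
    rewrite /B -!mulnA -!expnD; congr (V * 2 ^ _); lia.
  by rewrite leq_mul2r H4 orbT.
have H6 : 2 ^ k <= B.
  have : 2 ^ (6 * k) = 2 ^ k * 2 ^ (5 * k) by rewrite -expnD; congr (2 ^ _); lia.
  move=> E; move: H5; rewrite E leq_pmul2r //; exact: expn_gt0.
have : B < 2 ^ k.
  apply: leq_trans (ltn_expl B (ltnSn 1)) _; rewrite leq_exp2l //; lia.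
lia.
Qed.
End Core.

Local Open Scope classical_set_scope.
Local Open Scope ring_scope.
Lemma det (R : realType) (a : nat -> nat) (N : nat) (v : R) :
  (forall t, (a t.+1 <= a t + N)%N) ->
  (forall k, ((2 ^ (k + 1))%:R)^-1 * (((8 ^ (k + 1))%:R * ln (8 ^ (k + 1))%:R)^-1 *
      \sum_(1 <= i < (8 ^ (k + 1)).+1) (a i)%:R) <= v) ->
  (fun tau => (a tau)%:R / tau%:R : R) @ \oo --> 0.
Proof.
move=> Hs Hv.
set Vn := (Num.trunc v).+1.
have vV : v <= Vn%:R by apply: ltW; exact: truncnS_gt.
have HS : forall k, (Ssum a (8 ^ (k + 1)) <= Vn * (2 ^ (k + 1) * 8 ^ (k + 1) * 8 * (k + 1)))%N.
  move=> k; rewrite -(ler_nat R).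
  have := Hv k; rewrite /Ssum -natr_sum.
  set S := (\sum_(_ <= _ < _) _)%N.
  set X := (8 ^ (k + 1))%:R : R.
  have X1 : 1 < X by rewrite /X ltr1n; apply: (@leq_trans 8) => //; rewrite -{1}(expn1 8) leq_exp2l //; lia.
  have X0 : 0 < X by apply: lt_trans X1.
  have Lg0 : 0 < ln X by exact: ln_gt0.
  have Lgle : ln X <= 8 * (k + 1)%:R.
    rewrite /X natrX lnXn // -[ln _ *+ _]mulr_natr ler_pM2r ?ltr0n ?addn1 //.
    by apply: ltW; apply: ln_sublinear.
  have P0 : 0 < (2 ^ (k + 1))%:R * (X * ln X) by rewrite mulr_gt0 ?mulr_gt0 // ltr0n expn_gt0.
  rewrite mulrA -invfM => Hk.
  have HSv : S%:R <= v * ((2 ^ (k + 1))%:R * (X * ln X)).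
    by rewrite -ler_pdivrMr // mulrC.
  apply: (le_trans HSv).
  rewrite !natrM.
  apply: le_trans (ler_wpM2r (ltW P0) vV) _.
  rewrite ler_pM2l ?ltr0n // -/X -!mulrA ler_pM2l ?ltr0n ?expn_gt0 //.
  by rewrite ler_pM2l //.
apply/cvgrPdist_lt => e e0.
set m := (Num.trunc e^-1).+1.
have em : e^-1 < (2 ^ m)%:R.
  apply: (lt_le_trans (truncnS_gt _)); rewrite ler_nat; apply: ltnW; exact: ltn_expl.
have [K HK] := @core a N Hs Vn m HS.
near=> tau.
have Ht : (K.+1 <= tau)%N by near: tau; exists K.+1.
have t0 : 0 < tau%:R :> R by rewrite ltr0n; lia.
have := HK tau (ltnW Ht); rewrite -(ler_nat R) natrM => H.
rewrite sub0r normrN ger0_norm ?divr_ge0 //.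
suff Hg : (a tau)%:R / tau%:R < e :> R by [].
rewrite ltr_pdivrMr //.
apply: (le_lt_trans (y := tau%:R / (2 ^ m)%:R)).
  by rewrite ler_pdivlMr ?ltr0n ?expn_gt0.
rewrite mulrC ltr_pM2r // invf_plt ?posrE ?ltr0n ?expn_gt0 //.
Unshelve. all: by end_near.
Qed.

Lemma qstate_ext N (arr1 arr2 : 'I_N -> nat -> bool) (s1 s2 : nat -> schedule N) tau :
  (forall n t, (t < tau)%N -> arr1 n t = arr2 n t) ->
  (forall t, (t < tau)%N -> s1 t = s2 t) ->
  forall n, qstate arr1 s1 tau n = qstate arr2 s2 tau n.
Proof.
elim: tau => [|t IH] H1 H2 n //=.
rewrite IH; last 2 first.
- by move=> n' t' Ht; apply: H1; lia.
- by move=> t' Ht; apply: H2; lia.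
by rewrite H1 ?H2.
Qed.

Lemma Zt_ext R N (arr1 arr2 : 'I_N -> nat -> bool) (s1 s2 : nat -> schedule N) tau :
  (forall n t, (t < tau)%N -> arr1 n t = arr2 n t) ->
  (forall t, (t < tau)%N -> s1 t = s2 t) ->
  Zt R arr1 s1 tau = Zt R arr2 s2 tau.
Proof.
move=> H1 H2; rewrite /Zt; congr (_ * _).
apply: eq_big_nat => i /andP[_ Hi]; congr (_%:R).
rewrite /absW; apply: eq_bigr => n _; rewrite /Wq.
rewrite (@qstate_ext N arr1 arr2 s1 s2 i) //.
- by move=> n' t Ht; apply: H1; lia.
- by move=> t Ht; apply: H2; lia.
Qed.

Lemma Zt_ge0 R N (arr : 'I_N -> nat -> bool) (s : nat -> schedule N) tau : 0 <= Zt R arr s tau.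
Proof.
rewrite /Zt; apply: mulr_ge0; last by apply: sumr_ge0.
rewrite invr_ge0; apply: mulr_ge0 => //.
case: tau => [|t]; first by rewrite ln0.
by apply: ln_ge0; rewrite ler1n.
Qed.

Section Meas.
Context (d : measure_display) (T : measurableType d).

Lemma fin_key_fun (K : finType) (key : T -> K) (d' : measure_display) (U : measurableType d')
  (h : K -> U) : (forall k, measurable [set w | key w = k]) ->
  measurable_fun setT (fun w => h (key w)).
Proof.
move=> Hk _ B mB; rewrite setTI.
rewrite (_ : _ @^-1` B = \bigcup_(k in [set k | B (h k)]) [set w | key w = k]).
  by apply: fin_bigcup_measurable => //; exact: finite_finset.
apply/seteqP; split => w /=.
- by move=> Bw; exists (key w).
- by case=> k /= Bk ->.
Qed.

Variables (N : nat) (A : 'I_N -> nat -> T -> bool) (sched : T -> nat -> schedule N).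
Hypothesis HA : forall n t, measurable [set w | A n t w].
Hypothesis Hsch : forall tau pi, measurable [set w | sched w tau = pi].

Definition key tau (w : T) : {ffun 'I_N * 'I_tau -> bool} * {ffun 'I_tau -> schedule N} :=
  ([ffun p => A p.1 (val p.2) w], [ffun i => sched w (val i)]).

Lemma key_meas tau k : measurable [set w | key tau w = k].
Proof.
rewrite (_ : [set w | key tau w = k] =
  (\bigcap_(p in [set: 'I_N * 'I_tau]) [set w | A p.1 (val p.2) w = k.1 p]) `&`
  (\bigcap_(i in [set: 'I_tau]) [set w | sched w (val i) = k.2 i])).
  apply: measurableI; apply: fin_bigcap_measurable; try exact: finite_finset.
    move=> p _; case: (k.1 p); first exact: HA.
    rewrite (_ : [set w | _] = ~` [set w | A p.1 (val p.2) w]); first exact: measurableC.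
    by apply/seteqP; split => w /=; case: (A _ _ w).
  by move=> i _; exact: Hsch.
apply/seteqP; split => w /=.
- by move=> <-; split => p _ /=; rewrite ffunE.
- case: k => k1 k2 [/= H1 H2]; rewrite /key; congr pair; apply/ffunP => p; rewrite ffunE.
  + exact: H1.
  + exact: H2.
Qed.

Definition arr_of tau (k : {ffun 'I_N * 'I_tau -> bool} * {ffun 'I_tau -> schedule N})
  (n : 'I_N) (t : nat) : bool :=
  if @insub _ (fun x => (x < tau)%N) 'I_tau t is Some j then k.1 (n, j) else false.
Definition sch_of tau (k : {ffun 'I_N * 'I_tau -> bool} * {ffun 'I_tau -> schedule N})
  (t : nat) : schedule N :=
  if @insub _ (fun x => (x < tau)%N) 'I_tau t is Some j then k.2 j else [ffun _ => false].

Lemma Zt_key (R : realType) tau w :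
  Zt R (fun n t => A n t w) (sched w) tau = Zt R (@arr_of tau (key tau w)) (@sch_of tau (key tau w)) tau.
Proof.
apply: Zt_ext.
- move=> n t Ht; rewrite /arr_of; case: insubP => [j _ Ej|]; last by rewrite Ht.
  by rewrite ffunE /= Ej.
- move=> t Ht; rewrite /sch_of; case: insubP => [j _ Ej|]; last by rewrite Ht.
  by rewrite ffunE Ej.
Qed.

Definition Zfun (R : realType) tau (c : R) : T -> \bar R :=
  fun w => (c * Zt R (fun n t => A n t w) (sched w) tau)%:E.

Lemma Zt_meas (R : realType) tau (c : R) : measurable_fun setT (Zfun R tau c).
Proof.
pose h := fun k => (c * Zt R (@arr_of tau k) (@sch_of tau k) tau)%:E : \bar R.
have H := @fin_key_fun _ (key tau) _ (\bar R) h (key_meas tau).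
suff E : Zfun R tau c = (fun w => h (key tau w)) by rewrite E.
by apply: funext => w; rewrite /h /Zfun Zt_key.
Qed.

End Meas.

Theorem lemma2 (d : measure_display) (T : measurableType d) (R : realType)
  (P : probability T R) (N M : nat) (S : {set schedule N})
  (dest : 'I_N -> nat -> 'I_M) (f : R -> R) (rho : R) (lambda : 'I_N -> R)
  (A : 'I_N -> nat -> T -> bool)
  (dep : T -> 'I_N -> nat -> nat) (sched : T -> nat -> schedule N) (C : R) :
  monotone_sched S -> covers_all S ->
  good_f f rho ->
  strictly_admissible S lambda ->
  (forall n t, measurable [set w | A n t w]) ->
  (forall n t, P [set w | A n t w] = (lambda n)%:E) ->
  mutually_independent_bool P (fun it : 'I_N * nat => A it.1 it.2) ->
  (forall w, shadow_cfn (fun n t => A n t w) dest (dep w)) ->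
  (forall w, MUCF S f (fun n t => A n t w) (dep w) (sched w)) ->
  (forall tau pi, measurable [set w | sched w tau = pi]) ->
  (forall tau : nat, (2 <= tau)%N ->
     (\int[P]_w (Zt R (fun n t => A n t w) (sched w) tau)%:E <= C%:E)%E) ->
  {ae P, forall w, (fun tau : nat => (absW (fun n t => A n t w) (sched w) tau)%:R / tau%:R : R)
                     @ \oo --> (0 : R)}.
Proof.
move=> _ _ _ _ HA _ _ _ _ Hsch HC.
pose wgt k : R := ((2 ^ (k + 1))%:R)^-1.
have wgt0 k : 0 <= wgt k by rewrite /wgt invr_ge0.
pose g k := @Zfun d T N A sched R (8 ^ (k + 1)) (wgt k).
have g0 k w : (0 <= g k w)%E by rewrite /g /Zfun lee_fin mulr_ge0 // Zt_ge0.
have gm k : measurable_fun setT (g k) by exact: Zt_meas.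
pose V w := (\sum_(k <oo) g k w)%E.
have V0 w : (0 <= V w)%E by apply: nneseries_ge0 => k _ _; exact: g0.
have Vm : measurable_fun setT V.
  apply: (emeasurable_fun_cvg (fun m w => \sum_(0 <= k < m) g k w)%E).
  - by move=> m; exact: emeasurable_sum.
  - by move=> w _; apply: is_cvg_nneseries => k _ _; exact: g0.
have Zm k : measurable_fun setT
    (fun w => (Zt R (fun n t => A n t w) (sched w) (8 ^ (k + 1)))%:E : \bar R).
  suff -> : (fun w => (Zt R (fun n t => A n t w) (sched w) (8 ^ (k + 1)))%:E : \bar R)
    = @Zfun d T N A sched R (8 ^ (k + 1)) 1 by exact: Zt_meas.
  by apply: funext => w; rewrite /Zfun mul1r.
have intg k : (\int[P]_w g k w <= (wgt k * C)%:E)%E.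
  rewrite /g /Zfun.
  under eq_integral do rewrite EFinM.
  rewrite ge0_integralZl_EFin //; last by move=> w _; rewrite lee_fin Zt_ge0.
  rewrite EFinM lee_wpmul2l ?lee_fin //.
  apply: HC.
  by apply: (@leq_trans 8) => //; rewrite -{1}(expn1 8) leq_exp2l //; lia.
have sumC : (\sum_(k <oo) (wgt k * C)%:E = C%:E)%E.
  have := @cvg_geometric_eseries_half R C 0.
  rewrite expr0 divr1 => H.
  suff E : (fun n => \sum_(0 <= k < n) (wgt k * C)%:E)%E =
      eseries (fun k => (C / (2 ^ (k + 1))%:R)%:E).
    by apply: cvg_lim => //; rewrite E.
  apply: funext => n; rewrite /eseries /=.
  by apply: eq_bigr => k _; rewrite /wgt mulrC.
have intV : (\int[P]_w V w <= C%:E)%E.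
  rewrite /V (integral_nneseries P measurableT gm); last by move=> k w _; exact: g0.
  rewrite -sumC; apply: lee_nneseries.
  - by move=> k _ _; apply: integral_ge0 => w _; exact: g0.
  - by move=> k _; exact: intg.
have Vint : P.-integrable setT V.
  apply/integrableP; split => //.
  under eq_integral do rewrite gee0_abs //.
  by apply: le_lt_trans intV _; exact: ltry.
have := integrable_ae measurableT Vint.
apply: filterS => w /(_ I) Vfin.
apply: (@det R _ N (fine (V w))).
  by move=> t; exact: absW_step.
move=> k.
have gV : (g k w <= V w)%E.
  apply: (@le_trans _ _ (\sum_(0 <= i < k.+1) g i w)%E).
    rewrite big_nat_recr //=; apply: leeDr.
    by apply: sume_ge0 => i _; exact: g0.
  exact: nneseries_lim_ge (fun i _ _ => g0 i w).
move: gV; rewrite -(fineK Vfin) /g /Zfun lee_fin.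
by rewrite /Zt.
Qed.
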